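(* Let $N, M \ge 1$ be integers, let the sites be indexed by $j \in \mathbb{Z}_M$ (indices taken cyclically, so site $M+1$ is site $1$), and let $\lambda \ge 0$. Let real numbers $d_{i j l}$, for $i \in \{1,\dots,N\}$ and $j,l \in \mathbb{Z}_M$, satisfy the additive property $d_{ijl} + d_{ilk} = d_{ijk}$ for all $i$ and all $j,l,k \in \mathbb{Z}_M$. Potts model: for a configuration $s = (s_1,\dots,s_M) \in \{1,\dots,N\}^{M}$ define $$H_s(s) = -\sum_{j \in \mathbb{Z}_M} d_{s_j\, j\, (j+1)} + \lambda\, \#\{ j \in \mathbb{Z}_M : s_j \neq s_{j+1}\}.$$ Ising (domain-wall) model: for a configuration $c = (c_1,\dots,c_M) \in \{0,1\}^M$, let $p_1 < p_2 < \dots < p_K$ be the sites with $c_{p}=1$, and define $$H_c(c) = -\sum_{k=1}^{K} J_{p_k\, p_{k+1}} + \lambda \sum_{j} c_j, \qquad p_{K+1} := p_1,$$ where $J_{jl} = \max_{i} d_{ijl}$ (the sum over $k$ is empty, hence $0$, when $K=0$). Then the ground state energies coincide: $\min_{s \in \{1,\dots,N\}^M} H_s(s) = \min_{c \in \{0,1\}^M} H_c(c)$.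
   Context: Interpretation (not needed for the statement): sites $j$ are sampled body shapes traversed cyclically in one gait cycle, the Potts spin value $s_j$ is the contact pattern used on the step from shape $j$ to shape $j+1$, $d_{ijl}$ is the forward displacement obtained by moving from shape $j$ to shape $l$ with contact pattern $i$, and $\lambda$ is a penalty per contact switch. A domain wall $c_{j+1}=1$ corresponds to $s_j \neq s_{j+1}$, and the coupling $J_{jl}$ acts only between cyclically consecutive domain walls. *)

(* Defs.v *)
From HB Require Import structures.
From mathcomp Require Import all_boot all_order all_algebra.
From mathcomp Require Import reals.
Set Implicit Arguments. Unset Strict Implicit. Unset Printing Implicit Defensive.
Import Order.TTheory GRing.Theory Num.Theory.
Local Open Scope ring_scope.

Definition fmax (R : realDomainType) (I : finType) (i0 : I) (F : I -> R) : R :=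
  \big[Num.max/F i0]_(i : I) F i.
Definition fmin (R : realDomainType) (I : finType) (i0 : I) (F : I -> R) : R :=
  \big[Num.min/F i0]_(i : I) F i.

(* Sites are 'I_M, taken cyclically: the successor of j is ordS j (= j+1 mod M).
   Contact patterns are 'I_N (i.e. {1..N} shifted to {0..N-1}). *)

Definition H_potts (R : realDomainType) (N M : nat)
  (d : 'I_N -> 'I_M -> 'I_M -> R) (lambda : R) (s : {ffun 'I_M -> 'I_N}) : R :=
  - (\sum_(j : 'I_M) d (s j) j (ordS j))
  + lambda * (#|[set j : 'I_M | s j != s (ordS j)]|)%:R.

Definition Jcoup (R : realDomainType) (N M : nat) (i0 : 'I_N)
  (d : 'I_N -> 'I_M -> 'I_M -> R) (j l : 'I_M) : R :=
  fmax i0 (fun i => d i j l).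

Definition walls (M : nat) (c : {ffun 'I_M -> bool}) : seq 'I_M :=
  [seq j <- enum 'I_M | c j].

(* Ising (domain-wall) Hamiltonian: cyclically consecutive pairs
   (p_k, p_{k+1}) with p_{K+1} = p_1 are given by zip ps (rot 1 ps). *)
Definition H_ising (R : realDomainType) (N M : nat) (i0 : 'I_N)
  (d : 'I_N -> 'I_M -> 'I_M -> R) (lambda : R) (c : {ffun 'I_M -> bool}) : R :=
  let ps := walls c in
  - (\sum_(pq <- zip ps (rot 1 ps)) Jcoup i0 d pq.1 pq.2)
  + lambda * (\sum_(j : 'I_M) (c j : nat))%:R.

(* Main.v *)
Require Import Defs.
From HB Require Import structures.
From mathcomp Require Import all_boot all_order all_algebra.
From mathcomp Require Import reals.
From mathcomp Require Import zify.
Import Order.TTheory GRing.Theory Num.Theory.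
Local Open Scope ring_scope.

Lemma fmin_le (R : realDomainType) (I : finType) (i0 : I) (F : I -> R) i :
  fmin i0 F <= F i.
Proof. by rewrite /fmin (bigD1 i) //= ge_min lexx. Qed.

Lemma le_fmin (R : realDomainType) (I : finType) (i0 : I) (F : I -> R) x :
  (forall i, x <= F i) -> x <= fmin i0 F.
Proof.
move=> H; rewrite /fmin; elim/big_ind: _ => // a b Ha Hb.
by rewrite le_min Ha Hb.
Qed.

Lemma fmax_ge (R : realDomainType) (I : finType) (i0 : I) (F : I -> R) i :
  F i <= fmax i0 F.
Proof. by rewrite /fmax (bigD1 i) //= le_max lexx. Qed.

Lemma fmax_ex (R : realDomainType) (I : finType) (i0 : I) (F : I -> R) :
  exists i, fmax i0 F = F i.
Proof.
rewrite /fmax; elim/big_ind: _ => //; first by exists i0.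
- move=> a b [i ->] [j ->]; rewrite /Num.max.
  by case: ifP => _; [exists j | exists i].
- by move=> i _; exists i.
Qed.

Definition om (M : nat) (hM : (0 < M)%N) (a : nat) : 'I_M := Ordinal (ltn_pmod a hM).
Arguments om {M}.

Lemma om_val M (hM : (0 < M)%N) (j : 'I_M) : om hM j = j.
Proof. by apply: val_inj; rewrite /= modn_small. Qed.

Lemma omS M (hM : (0 < M)%N) a : om hM a.+1 = ordS (om hM a).
Proof. by apply: val_inj; rewrite /= -[a.+1]addn1 -modnDml addn1. Qed.

Lemma omD M (hM : (0 < M)%N) a : om hM (a + M) = om hM a.
Proof. by apply: val_inj; rewrite /= modnDr. Qed.

Lemma d0 (R : realDomainType) N M (d : 'I_N -> 'I_M -> 'I_M -> R)
  (hadd : forall (i : 'I_N) (j l k : 'I_M), d i j l + d i l k = d i j k) i j :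
  d i j j = 0.
Proof. by have := hadd i j j j; rewrite -{3}[d i j j]addr0 => /addrI. Qed.

Lemma tel (R : realDomainType) N M (hM : (0 < M)%N) (d : 'I_N -> 'I_M -> 'I_M -> R)
  (hadd : forall (i : 'I_N) (j l k : 'I_M), d i j l + d i l k = d i j k)
  (S : nat -> 'I_N) i x y : (x <= y)%N -> (forall a, (x <= a < y)%N -> S a = i) ->
  \sum_(x <= a < y) d (S a) (om hM a) (om hM a.+1) = d i (om hM x) (om hM y).
Proof.
move=> xy HS; rewrite (eq_big_nat _ _ (F2 := fun a => d i (om hM a) (om hM a.+1))); last first.
  by move=> a /HS ->.
elim: y xy {HS} => [|y IH]; first by rewrite leqn0 => /eqP ->; rewrite big_geq // d0.
rewrite leq_eqVlt => /orP [/eqP ->|]; first by rewrite big_geq // d0.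
by rewrite ltnS => xy; rewrite big_nat_recr //= IH.
Qed.

Lemma shift_sum (R : realDomainType) M (g : nat -> R) :
  (forall a, g (a + M)%N = g a) ->
  forall x, \sum_(x <= a < x + M) g a = \sum_(0 <= a < M) g a.
Proof.
move=> hg; elim=> [//|x IH]; rewrite -IH.
case: M hg {IH} => [|M] hg; first by rewrite !addn0 !big_geq.
rewrite [RHS](@big_ltn _ _ _ x (x + M.+1)); last by rewrite addnS ltnS leq_addr.
rewrite addSn big_nat_recr /=; last by rewrite addnS ltnS leq_addr.
by rewrite hg addrC.
Qed.

Lemma seg (R : realDomainType) N M (hM : (0 < M)%N) (d : 'I_N -> 'I_M -> 'I_M -> R)
  (hadd : forall (i : 'I_N) (j l k : 'I_M), d i j l + d i l k = d i j k)
  (S : nat -> 'I_N) ls x : path ltn x ls ->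
  (forall a, (x <= a)%N -> (a.+1 < last x ls)%N -> a.+1 \notin ls -> S a.+1 = S a) ->
  \sum_(x <= a < last x ls) d (S a) (om hM a) (om hM a.+1)
  = \sum_(pq <- zip (x :: ls) ls) d (S pq.1) (om hM pq.1) (om hM pq.2).
Proof.
elim: ls x => [|y ls IH] x /=; first by move=> _ _; rewrite big_geq // big_nil.
move=> /andP [xy py] HS.
have ally := order_path_min ltn_trans py.
have ylast : (y <= last y ls)%N.
  have := mem_last y ls; rewrite inE => /orP [/eqP ->//|/(allP ally)].
  exact: ltnW.
rewrite big_cons /= (big_cat_nat _ (n := y)) ?(ltnW xy) //=.
congr (_ + _).
  apply: (@tel R N M hM d hadd S (S x) x y (ltnW xy)) => a /andP [xa ay].
  elim: a xa ay => [|a IHa]; first by rewrite leqn0 => /eqP ->.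
  rewrite leq_eqVlt => /orP [/eqP ->//|xa ay].
  rewrite HS //; first by apply: IHa => //; exact: ltnW.
  - exact: (leq_trans ay ylast).
  - rewrite inE negb_or neq_ltn ay /=.
    by apply/negP => /(allP ally); rewrite ltnNge (ltnW ay).
apply: IH => // a ya al an; apply: HS => //.
  exact: (leq_trans (ltnW xy) ya).
by rewrite inE negb_or an andbT neq_ltn ltnS ya orbT.
Qed.

Lemma map_zip2 (A B : Type) (f : A -> B) (u v : seq A) :
  map (fun ab => (f ab.1, f ab.2)) (zip u v) = zip (map f u) (map f v).
Proof. by elim: u v => [|x u IH] [|y v] //=; rewrite IH. Qed.

Lemma zip_rcons_l (A B : Type) (s : seq A) (t : seq B) a :
  size s = size t -> zip (rcons s a) t = zip s t.
Proof. by elim: s t => [|x s IH] [|y t] //= [] /IH ->. Qed.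

Lemma mem_walls M (c : {ffun 'I_M -> bool}) p : (p \in walls c) = c p.
Proof. by rewrite mem_filter mem_enum andbT. Qed.

Lemma walls_sorted M (c : {ffun 'I_M -> bool}) : sorted ltn (map val (walls c)).
Proof.
rewrite sorted_map /walls; apply: sorted_filter.
  by move=> y x z; exact: ltn_trans.
by rewrite -sorted_map val_enum_ord iota_ltn_sorted.
Qed.

Lemma sum_nat (R : realDomainType) N M (hM : (0 < M)%N) (d : 'I_N -> 'I_M -> 'I_M -> R)
  (s : 'I_M -> 'I_N) :
  \sum_(j : 'I_M) d (s j) j (ordS j)
  = \sum_(0 <= a < M) d (s (om hM a)) (om hM a) (om hM a.+1).
Proof. by rewrite big_mkord; apply: eq_bigr => j _; rewrite omS !om_val. Qed.

Lemma KL (R : realDomainType) N M (hM : (0 < M)%N) (d : 'I_N -> 'I_M -> 'I_M -> R)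
  (hadd : forall (i : 'I_N) (j l k : 'I_M), d i j l + d i l k = d i j k)
  (c : {ffun 'I_M -> bool}) (s : 'I_M -> 'I_N) p1 rest :
  (forall j, c (ordS j) = false -> s (ordS j) = s j) ->
  walls c = p1 :: rest ->
  \sum_(j : 'I_M) d (s j) j (ordS j)
  = \sum_(pq <- zip (walls c) (rot 1 (walls c))) d (s pq.1) pq.1 pq.2.
Proof.
move=> hch hw.
have hs := @walls_sorted M c; rewrite hw /= in hs.
have allr := order_path_min ltn_trans hs.
have allp : forall p, c p -> (p1 <= p)%N.
  move=> p; rewrite -mem_walls hw inE => /orP [/eqP -> //|pr].
  by apply: ltnW; apply: (allP allr); apply: map_f.
rewrite (@sum_nat R N M hM d s) -(@shift_sum R M (fun a => d (s (om hM a)) (om hM a) (om hM a.+1)) _ p1); last first.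
  by move=> a; rewrite /= -addSn !omD.
set ls := rcons (map (@nat_of_ord M) rest) (p1 + M)%N.
have lastls : last (nat_of_ord p1) ls = (p1 + M)%N by rewrite last_rcons.
rewrite -lastls (@seg R N M hM d hadd (fun a => s (om hM a)) ls (nat_of_ord p1)); last first.
- move=> a p1a aM1 nin; rewrite /= omS; apply: hch; apply/negbTE/negP => cw.
  rewrite -omS in cw.
  case: (ltnP a.+1 M) => aM.
  + move: cw; rewrite -mem_walls hw inE => /orP [/eqP/(congr1 (@nat_of_ord M))|].
    by rewrite /= modn_small // => e; move: p1a; rewrite -e ltnn.
    move=> /(map_f (@nat_of_ord M)); rewrite /= modn_small // => ain.
    by move: nin; rewrite mem_rcons inE ain orbT.
  + have := allp _ cw; rewrite /= -(subnK aM) modnDr modn_small.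
      rewrite lastls in aM1; lia.
    by rewrite lastls in aM1; have := ltn_ord p1; lia.
- rewrite rcons_path hs /= last_map.
  by apply: (leq_trans (ltn_ord _)); rewrite leq_addl.
rewrite [in RHS]hw rot1_cons.
have -> : zip (p1 :: rest) (rcons rest p1)
    = map (fun ab => (om hM ab.1, om hM ab.2)) (zip (nat_of_ord p1 :: ls) ls).
  rewrite (@map_zip2 _ _ (om hM)) /= om_val map_rcons -map_comp (eq_map (@om_val M hM)) map_id omD om_val.
  by rewrite -rcons_cons zip_rcons_l //= size_rcons.
by rewrite (big_map (fun ab => (om hM ab.1, om hM ab.2))).
Qed.

Lemma KL0 (R : realDomainType) N M (hM : (0 < M)%N) (d : 'I_N -> 'I_M -> 'I_M -> R)
  (hadd : forall (i : 'I_N) (j l k : 'I_M), d i j l + d i l k = d i j k)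
  (s : 'I_M -> 'I_N) : (forall j, s (ordS j) = s j) ->
  \sum_(j : 'I_M) d (s j) j (ordS j) = 0.
Proof.
move=> hs.
rewrite (@sum_nat R N M hM d s) (@tel R N M hM d hadd (fun a => s (om hM a)) (s (om hM 0)) 0 M) //.
  by have := @omD M hM 0; rewrite add0n => ->; rewrite d0.
move=> a /andP [_]; elim: a => [//|a IH] aM.
by rewrite /= omS hs IH // ltnW.
Qed.

Lemma card_changes N M (s : 'I_M -> 'I_N) (c : {ffun 'I_M -> bool}) :
  (forall j, s j != s (ordS j) -> c (ordS j)) ->
  (#|[set j : 'I_M | s j != s (ordS j)]| <= \sum_(j : 'I_M) (c j : nat))%N.
Proof.
move=> H; rewrite -sum1_card big_mkcond /=.
rewrite [X in (_ <= X)%N](reindex_inj (@ordS_inj M)) /=.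
by apply: leq_sum => j _; rewrite inE; case: ifP => // /H ->.
Qed.

Lemma card_changes_eq N M (s : 'I_M -> 'I_N) :
  #|[set j : 'I_M | s j != s (ordS j)]|
  = \sum_(j : 'I_M) (([ffun j => s (ord_pred j) != s j] : {ffun 'I_M -> bool}) j : nat).
Proof.
rewrite -sum1_card big_mkcond /=.
rewrite [RHS](reindex_inj (@ordS_inj M)) /=.
by apply: eq_bigr => j _; rewrite inE ffunE ordSK; case: ifP.
Qed.

Lemma zip_mem_nxt (T : eqType) (ps t : seq T) p q : uniq ps -> size ps = size t ->
  (p, q) \in zip ps t -> p \in ps /\ q = nth p t (index p ps).
Proof.
move=> u sz pin.
have kl := index_mem (p, q) (zip ps t); rewrite pin size_zip sz minnn in kl.
have := @nth_index _ (p,q) (p,q) (zip ps t) pin.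
rewrite nth_zip // => -[e1 e2].
have kl' : (index (p, q) (zip ps t) < size ps)%N by rewrite sz.
split; first by rewrite -e1 mem_nth.
have -> : index p ps = index (p, q) (zip ps t) by rewrite -{1}e1 index_uniq.
by rewrite -{1}e2; apply: set_nth_default.
Qed.

Fixpoint tseq (M N : nat) (hM : (0 < M)%N) (c : {ffun 'I_M -> bool}) (F : 'I_M -> 'I_N)
  (pm : 'I_M) (a : nat) {struct a} : 'I_N :=
  match a with
  | 0 => if c (om hM 0) then F (om hM 0) else F pm
  | a'.+1 => if c (om hM a'.+1) then F (om hM a'.+1) else tseq M N hM c F pm a'
  end.

Arguments tseq {M N}.

Lemma tseq_wall M N (hM : (0 < M)%N) (c : {ffun 'I_M -> bool}) (F : 'I_M -> 'I_N) (pm : 'I_M) a :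
  c (om hM a) -> tseq hM c F pm a = F (om hM a).
Proof. by case: a => [|a] /= ->. Qed.

Lemma dir2 (R : realDomainType) N M (hN : (0 < N)%N) (hM : (0 < M)%N) (lambda : R)
  (d : 'I_N -> 'I_M -> 'I_M -> R)
  (hadd : forall (i : 'I_N) (j l k : 'I_M), d i j l + d i l k = d i j k)
  (s : {ffun 'I_M -> 'I_N}) :
  exists c, H_ising (Ordinal hN) d lambda c <= H_potts d lambda s.
Proof.
exists [ffun j => s (ord_pred j) != s j].
set c := [ffun j => _].
have hch : forall j, c (ordS j) = false -> s (ordS j) = s j.
  by move=> j; rewrite ffunE ordSK => /negbFE/eqP ->.
rewrite /H_ising /H_potts -card_changes_eq lerD2r lerN2.
have [hw|[p1 [rest hw]]] : walls c = [::] \/ exists p1 rest, walls c = p1 :: rest.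
  by case: (walls c) => [|p1 rest]; [left | right; exists p1, rest].
  rewrite (@KL0 R N M hM d hadd s); first by rewrite hw big_nil.
  move=> j; apply: hch; apply/negbTE; by rewrite -mem_walls hw.
rewrite (@KL R N M hM d hadd c s p1 rest hch hw).
apply: ler_sum => pq _.
exact: (@fmax_ge R _ (Ordinal hN) (fun i => d i pq.1 pq.2) (s pq.1)).
Qed.

Lemma dir1 (R : realDomainType) N M (hN : (0 < N)%N) (hM : (0 < M)%N) (lambda : R)
  (hlam : 0 <= lambda)
  (d : 'I_N -> 'I_M -> 'I_M -> R)
  (hadd : forall (i : 'I_N) (j l k : 'I_M), d i j l + d i l k = d i j k)
  (c : {ffun 'I_M -> bool}) :
  exists s, H_potts d lambda s <= H_ising (Ordinal hN) d lambda c.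
Proof.
set i0 := Ordinal hN.
have [hw|[p1 [rest hw]]] : walls c = [::] \/ exists p1 rest, walls c = p1 :: rest.
  by case: (walls c) => [|p1 rest]; [left | right; exists p1, rest].
  exists [ffun _ => i0].
  rewrite /H_ising /H_potts (@KL0 R N M hM d hadd); last by move=> j; rewrite !ffunE.
  rewrite hw big_nil oppr0 !add0r; apply: ler_wpM2l => //; rewrite ler_nat.
  by apply: card_changes => j; rewrite !ffunE eqxx.
set ps := walls c.
pose nxt p := nth p (rot 1 ps) (index p ps).
pose F p := odflt i0 [pick i | Jcoup i0 d p (nxt p) == d i p (nxt p)].
have hF : forall p, d (F p) p (nxt p) = Jcoup i0 d p (nxt p).
  move=> p; rewrite /F; case: pickP => [i /eqP -> //|H].
  have [i hi] := @fmax_ex R _ i0 (fun i => d i p (nxt p)).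
  by have := H i; rewrite /Jcoup hi eqxx.
have cp1 : c p1 by rewrite -mem_walls hw mem_head.
pose pm := [arg max_(p > p1 | c p) nat_of_ord p].
have [cpm pmmax] : c pm /\ forall p, c p -> (p <= pm)%N.
  by rewrite /pm; case: arg_maxnP => // p cp H; split.
pose s := [ffun j : 'I_M => tseq hM c F pm j].
have P1 : forall p, c p -> s p = F p.
  by move=> p cp; rewrite ffunE tseq_wall om_val.
have after : forall k, (pm + k < M)%N -> tseq hM c F pm (pm + k) = F pm.
  elim=> [|k IH] hk; first by rewrite addn0 tseq_wall om_val.
  rewrite addnS /=; case: ifP => [cc|_]; last by apply: IH; apply: ltnW; rewrite -addnS.
  by have := pmmax _ cc; rewrite /= modn_small -?addnS //; lia.
have hch : forall j, c (ordS j) = false -> s (ordS j) = s j.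
  move=> j cf; rewrite !ffunE.
  case: (ltnP j.+1 M) => hj.
    have e : nat_of_ord (ordS j) = j.+1 by rewrite /= modn_small.
    have eo : om hM j.+1 = ordS j by rewrite omS om_val.
    by rewrite e /= eo cf.
  have jM : j.+1 = M by apply/eqP; rewrite eqn_leq hj ltn_ord.
  have e : nat_of_ord (ordS j) = 0%N by rewrite /= jM modnn.
  have eo : om hM 0 = ordS j by apply: val_inj; rewrite /= mod0n -e.
  rewrite e /= eo cf.
  have pj : (pm <= j)%N by rewrite -ltnS jM ltn_ord.
  by rewrite -(subnKC pj) after // subnKC.
exists s.
rewrite /H_ising /H_potts (@KL R N M hM d hadd c s p1 rest hch hw) -/ps.
apply: lerD.
  rewrite lerN2 le_eqVlt; apply/orP; left; apply/eqP; symmetry.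
  rewrite big_seq_cond [RHS]big_seq_cond; apply: eq_bigr => -[p q] /andP [pin _] /=.
  have ups : uniq ps by rewrite /ps /walls filter_uniq // enum_uniq.
  have szp : size ps = size (rot 1 ps) by rewrite size_rot.
  have [pps ->] := @zip_mem_nxt _ ps (rot 1 ps) p q ups szp pin.
  by rewrite P1 ?hF // -mem_walls.
apply: ler_wpM2l => //; rewrite ler_nat; apply: card_changes => j ne.
by apply/negPn/negP => /negbTE /hch e; rewrite e eqxx in ne.
Qed.

Theorem theorem1 (R : realType) (N M : nat) (hN : (0 < N)%N) (hM : (0 < M)%N)
  (lambda : R) (hlam : 0 <= lambda)
  (d : 'I_N -> 'I_M -> 'I_M -> R)
  (hadd : forall (i : 'I_N) (j l k : 'I_M), d i j l + d i l k = d i j k) :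
  fmin [ffun _ : 'I_M => Ordinal hN] (H_potts d lambda)
  = fmin [ffun _ : 'I_M => false] (H_ising (Ordinal hN) d lambda).
Proof.
apply/le_anti/andP; split.
  apply: le_fmin => c; have [s hs] := @dir1 R N M hN hM lambda hlam d hadd c.
  exact: le_trans (fmin_le _ _ _ _ s) hs.
apply: le_fmin => s; have [c hc] := @dir2 R N M hN hM lambda d hadd s.
exact: le_trans (fmin_le _ _ _ _ c) hc.
Qed.
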